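(* Let $\mu$ be any $r$-level Sherali-Adams solution of a $\Delta$-dense Max $k$-CSP instance $\mathcal{G}=(V,\mathcal{W},\{P_S\})$ with alphabet size $q$. Then for every integer $0<l\le r-k$ there exists an integer $0\le t\le l$ such that $$\mathbb{E}_{T\sim V^t,\ \phi_T\sim\mathcal{X}_T}[C(\mu|\phi_T)]\le\frac{k^2\log q}{l\Delta},$$ where $T$ is a uniformly random $t$-tuple of variables (identified with its underlying set) and $\phi_T$ is sampled from the marginal distribution $\mathcal{X}_T$ of $\mu$.
   Context: A Max $k$-CSP instance has finite variable set $V$, alphabet $\Sigma$ with $|\Sigma|=q$, a distribution $\mathcal{W}$ on $V^k$ and predicates $P_S:\Sigma^k\to[0,1]$; it is $\Delta$-dense if $\Delta\cdot\mathcal{W}(S)\le1/|V|^k$ for every $S\in V^k$. An $r$-level Sherali-Adams solution is a collection $\mu=\{\mathcal{X}_S\}$ of distributions $\mathcal{X}_S$ on $\Sigma^S$ for all $S\subseteq V$ with $|S|\le r$ whose marginals agree on intersections. For $|T|\le r-k$ and $\phi_T$ with $\mathcal{X}_T(\phi_T)>0$, the conditioned solution $\mu|\phi_T=\{\tilde{\mathcal{X}}_S\}_{|S|\le r-|T|}$ is given by $\tilde{\mathcal{X}}_S(\phi_S)=\mathcal{X}_{S\cup T}(\phi_S\circ\phi_T)/\mathcal{X}_T(\phi_T)$ if $\phi_S$ agrees with $\phi_T$ on $S\cap T$ and $0$ otherwise. For a tuple $S=(x_{i_1},\dots,x_{i_j})$, $C_\mu(x_S)$ is the total correlation (KL divergence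 of the joint distribution from the product of marginals, natural log) of $(\sigma_{i_1},\dots,\sigma_{i_j})$ jointly sampled from $\mathcal{X}_{\{x_{i_1},\dots,x_{i_j}\}}$, and $C(\mu)=\mathbb{E}_{S\sim\mathcal{W}}[C_\mu(x_S)]$. *)

(* Defs.v *)
From HB Require Import structures.
From mathcomp Require Import all_boot all_order all_algebra.
From mathcomp Require Import reals exp.
Set Implicit Arguments. Unset Strict Implicit. Unset Printing Implicit Defensive.
Import Order.TTheory GRing.Theory Num.Theory.
Local Open Scope ring_scope.

Section CSP.
Variables (R : realType) (V Sig : finType).

(* A partial assignment; an assignment phi_S : Sigma^S is represented by the
   partial function with domain exactly S. *)
Definition assign := {ffun V -> option Sig}.
Definition dom (phi : assign) : {set V} := [set x | phi x != None].
Definition restr (U : {set V}) (phi : assign) : assign :=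
  [ffun x => if x \in U then phi x else None].
Definition merge (phiS phiT : assign) : assign :=
  [ffun x => if phiS x is Some a then Some a else phiT x].

Definition SA_solution (r : nat) (X : {set V} -> assign -> R) : Prop :=
  [/\ (forall (S : {set V}) (phi : assign), (#|S| <= r)%N -> 0 <= X S phi),
      (forall (S : {set V}) (phi : assign), (#|S| <= r)%N -> dom phi != S -> X S phi = 0),
      (forall S : {set V}, (#|S| <= r)%N -> \sum_(phi : assign) X S phi = 1) &
      (forall (S S' : {set V}) (psi : assign), (#|S| <= r)%N -> (#|S'| <= r)%N ->
         \sum_(phi : assign | restr (S :&: S') phi == psi) X S phi
         = \sum_(phi : assign | restr (S :&: S') phi == psi) X S' phi)].

Definition condition (X : {set V} -> assign -> R) (T : {set V}) (phiT : assign)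
  : {set V} -> assign -> R :=
  fun S phiS =>
    if (dom phiS == S) && [forall x in S :&: T, phiS x == phiT x]
    then X (S :|: T) (merge phiS phiT) / X T phiT else 0.

Variable k : nat.

Definition jointp (X : {set V} -> assign -> R) (xs : k.-tuple V)
  (s : k.-tuple Sig) : R :=
  \sum_(phi : assign | [forall i, phi (tnth xs i) == Some (tnth s i)])
     X [set x in xs] phi.

Definition margp X xs (i : 'I_k) (a : Sig) : R :=
  \sum_(s : k.-tuple Sig | tnth s i == a) jointp X xs s.

(* total correlation: KL(joint || product of marginals), convention 0 ln 0 = 0 *)
Definition totcorr X xs : R :=
  \sum_(s : k.-tuple Sig | 0 < jointp X xs s)
     jointp X xs s * ln (jointp X xs s / \prod_(i < k) margp X xs i (tnth s i)).

Definition Ccorr (W : k.-tuple V -> R) X : R :=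
  \sum_(S : k.-tuple V) W S * totcorr X S.

Definition expCond (W : k.-tuple V -> R) X (t : nat) : R :=
  (#|V|%:R ^+ t)^-1 *
  \sum_(T : t.-tuple V) \sum_(phi : assign)
     X [set x in T] phi * Ccorr W (condition X [set x in T] phi).

Definition dense (Delta : R) (W : k.-tuple V -> R) : Prop :=
  forall S, Delta * W S <= 1 / (#|V|%:R ^+ k).

End CSP.

(* Main.v *)
Require Import Defs.
From HB Require Import structures.
From mathcomp Require Import all_boot all_order all_algebra.
From mathcomp Require Import reals exp.
From mathcomp Require Import ring lra zify.
Import Order.TTheory GRing.Theory Num.Theory.
Local Open Scope ring_scope.
Set Implicit Arguments. Unset Strict Implicit. Unset Printing Implicit Defensive.
Local Notation merge := Defs.merge.

Section Basic.
Variables (V Sig : finType).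
Local Notation assign := (assign V Sig).

Lemma in_dom (phi : assign) x : (x \in dom phi) = (phi x != None).
Proof. by rewrite inE. Qed.

Lemma restr_id (B : {set V}) (phi : assign) : dom phi = B -> restr B phi = phi.
Proof.
move=> <-; apply/ffunP=> x; rewrite ffunE in_dom.
by case: (phi x).
Qed.

Lemma restrE (B : {set V}) (phi : assign) x :
  restr B phi x = if x \in B then phi x else None.
Proof. by rewrite ffunE. Qed.

Lemma restr_restr (B C : {set V}) (phi : assign) : C \subset B ->
  restr C (restr B phi) = restr C phi.
Proof.
move=> sCB; apply/ffunP=> x; rewrite !ffunE.
by case: ifP => // xC; rewrite (subsetP sCB x xC).
Qed.

End Basic.

Section SA.
Variables (R : realType) (V Sig : finType).
Local Notation assign := (assign V Sig).
Variable X : {set V} -> assign -> R.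
Variable r : nat.
Hypothesis HX : SA_solution r X.

Lemma X_ge0 (S : {set V}) (phi : assign) : (#|S| <= r)%N -> 0 <= X S phi.
Proof. by case: HX => H _ _ _; apply: H. Qed.

Lemma X_dom (S : {set V}) (phi : assign) : (#|S| <= r)%N -> X S phi != 0 -> dom phi = S.
Proof.
case: HX => _ H _ _ hS; apply: contraNeq => /(H S phi hS) ->.
by rewrite eqxx.
Qed.

Lemma X_sum1 (S : {set V}) : (#|S| <= r)%N -> \sum_phi X S phi = 1.
Proof. by case: HX => _ _ H _; apply: H. Qed.

Lemma marg (B A : {set V}) (psi : assign) : B \subset A -> (#|A| <= r)%N ->
  \sum_(phi | restr B phi == psi) X A phi = X B psi.
Proof.
move=> sBA hA; have hB : (#|B| <= r)%N by apply: leq_trans (subset_leq_card sBA) hA.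
have eAB : A :&: B = B by apply/setIidPr.
case: HX => _ _ _ H; rewrite -{1}eAB H // eAB.
rewrite (big_mkcond (fun phi => restr B phi == psi)) /=.
rewrite (eq_bigr (fun phi => if phi == psi then X B phi else 0)).
  by rewrite -big_mkcond big_pred1_eq.
move=> phi _; have [->|nz] := eqVneq (X B phi) 0; first by rewrite !if_same.
by rewrite restr_id // (X_dom hB nz).
Qed.

Lemma push (B A : {set V}) (G : assign -> R) : B \subset A -> (#|A| <= r)%N ->
  \sum_phi X A phi * G (restr B phi) = \sum_psi X B psi * G psi.
Proof.
move=> sBA hA.
rewrite (partition_big (restr B) predT) //=; apply: eq_bigr => psi _.
rewrite -(marg psi sBA hA) mulr_suml; apply: eq_bigr => phi /eqP ->.
done.
Qed.

End SA.

Section Gen.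
Variable R : realType.

Lemma at_most_one (I : finType) (P : pred I) (f : I -> R) (F : R -> R) : F 0 = 0 ->
  (forall i j, P i -> P j -> f i != 0 -> f j != 0 -> i = j) ->
  F (\sum_(i | P i) f i) = \sum_(i | P i) F (f i).
Proof.
move=> F0 uq.
case: (pickP (fun i => P i && (f i != 0))) => [i0 /andP[Pi0 nz]| none].
  have z : forall j, P j && (j != i0) -> f j = 0.
    move=> j /andP[Pj nj]; apply/eqP; apply: contraR nj => nzj.
    by apply/eqP; apply: uq.
  rewrite (bigD1 i0) //= [in RHS](bigD1 i0) //= big1 ?addr0 //.
  by rewrite big1 ?addr0 // => j /z ->.
have z : forall i, P i -> f i = 0.
  by move=> i Pi; move: (none i); rewrite Pi /= => /negbFE/eqP.
by rewrite big1 // F0 big1 // => i Pi; rewrite z.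
Qed.

Lemma key_sum (T I : finType) (K : T -> I -> bool) (f : T -> R) (D : pred T)
    (F : R -> R) : F 0 = 0 ->
  (forall t, ~~ D t -> f t = 0) ->
  (forall i t t', D t -> D t' -> K t i -> K t' i -> t = t') ->
  (forall t, D t -> exists i0, forall i, K t i = (i == i0)) ->
  \sum_i F (\sum_(t | K t i) f t) = \sum_t F (f t).
Proof.
move=> F0 fD uK ex.
rewrite (eq_bigr (fun i => \sum_(t | K t i) F (f t))); last first.
  move=> i _; apply: at_most_one => // t t' Kt Kt' nz nz'.
  apply: (uK i) => //.
    by apply: contraR nz => /fD ->.
  by apply: contraR nz' => /fD ->.
rewrite (exchange_big_dep xpredT) //=; apply: eq_bigr => t _.
case Dt: (D t).
  have [i0 Hi0] := ex t Dt.
  by rewrite (eq_bigl (fun i => i == i0)) ?big_pred1_eq // => i; rewrite Hi0.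
by rewrite fD ?Dt // F0 big1.
Qed.

End Gen.


Section LnFacts.
Variable R : realType.

Lemma ln_le_sub1 (y : R) : 0 < y -> ln y <= y - 1.
Proof.
move=> y0; have := @le_ln1Dx R (y - 1).
rewrite addrCA subrr addr0; apply.
lra.
Qed.

Lemma ln_ge_1subV (y : R) : 0 < y -> 1 - y^-1 <= ln y.
Proof.
move=> y0; have := @ln_le_sub1 y^-1; rewrite invr_gt0 => /(_ y0).
by rewrite lnV ?posrE // lerNl opprB.
Qed.

Lemma inj_sum (I J : finType) (P : pred I) (Q : pred J) (g : I -> J) (F : J -> R) :
  {in P &, injective g} -> (forall i, P i -> Q (g i)) -> (forall j, Q j -> 0 <= F j) ->
  \sum_(i | P i) F (g i) <= \sum_(j | Q j) F j.
Proof.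
move=> ig PQ F0.
have -> : \sum_(i | P i) F (g i) = \sum_(i in P) F (g i) by [].
rewrite -(big_imset _ ig) /= [in X in _ <= X]big_mkcond /= [in X in X <= _]big_mkcond /=.
apply: ler_sum => j _.
case: ifP => [/imsetP[i Pi ->]|_]; first by rewrite PQ.
by case: ifP => // /F0.
Qed.

End LnFacts.

Section Ent.
Variables (R : realType) (V Sig : finType).
Local Notation assign := (assign V Sig).
Variable X : {set V} -> assign -> R.
Variable r : nat.
Hypothesis HX : SA_solution r X.

Definition h (A : {set V}) : R := - \sum_phi X A phi * ln (X A phi).

Lemma assign_ext (B : {set V}) (phi phi' : assign) : dom phi = B -> dom phi' = B ->
  (forall x, x \in B -> phi x = phi' x) -> phi = phi'.
Proof.
move=> d d' e; apply/ffunP=> x; case xB: (x \in B); first by apply: e.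
have : x \notin dom phi by rewrite d xB.
have : x \notin dom phi' by rewrite d' xB.
by rewrite !in_dom !negbK => /eqP -> /eqP ->.
Qed.

Lemma X_le_marg (B A : {set V}) (phi : assign) : B \subset A -> (#|A| <= r)%N ->
  X A phi <= X B (restr B phi).
Proof.
move=> sBA hA; rewrite -(marg HX _ sBA hA) (bigD1 phi) //= lerDl.
by apply: sumr_ge0 => i _; apply: X_ge0 HX _ _ hA.
Qed.

Lemma h_push (B A : {set V}) : B \subset A -> (#|A| <= r)%N ->
  h B = - \sum_phi X A phi * ln (X B (restr B phi)).
Proof. by move=> sBA hA; rewrite /h (push HX (fun psi => ln (X B psi)) sBA hA). Qed.

Lemma h0 : h set0 = 0.
Proof.
have h0r : (#|@set0 V| <= r)%N by rewrite cards0.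
rewrite /h (_ : \sum_phi _ = (fun y : R => y * ln y) (\sum_phi X set0 phi)).
  by rewrite (X_sum1 HX h0r) ln1 mulr0 oppr0.
symmetry; apply: (@at_most_one R _ xpredT (X set0) (fun y => y * ln y)).
  by rewrite mul0r.
move=> i j _ _ nzi nzj; apply: (@assign_ext set0).
- exact: (X_dom HX h0r nzi).
- exact: (X_dom HX h0r nzj).
by move=> x; rewrite inE.
Qed.


Lemma h_single (a : V) : (1 <= r)%N -> h [set a] <= ln (#|Sig|%:R).
Proof.
move=> r1; have hr : (#|[set a]| <= r)%N by rewrite cards1.
set p := X [set a].
have supp : forall phi, p phi != 0 -> phi a != None.
  by move=> phi nz; rewrite -in_dom (X_dom HX hr nz) set11.
case q0: (#|Sig| == 0)%N.
  have z : forall phi, p phi = 0.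
    move=> phi; apply/eqP; apply: contraT => nz.
    move: (supp phi nz); case: (phi a) => [s|] // _.
    by have := card0_eq (eqP q0) s; rewrite inE.
  rewrite /h (eq_bigr (fun _ => 0)); last by move=> phi _; rewrite (_ : X [set a] phi = 0) ?mul0r //; exact: z.
  by rewrite big1 // oppr0 (eqP q0) ln0.
have qp : (0 : R) < #|Sig|%:R by rewrite ltr0n lt0n q0.
set q : R := #|Sig|%:R.
have key : forall phi, - (p phi * ln (p phi)) <=
    p phi * ln q + ((p phi != 0)%:R / q - p phi).
  move=> phi; have [->|nz] := eqVneq (p phi) 0.
    by rewrite /=; lra.
  have pp : 0 < p phi by rewrite lt0r nz (X_ge0 HX _ hr).
  have := ln_ge_1subV (mulr_gt0 qp pp).
  rewrite lnM ?posrE // => H.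
  have := ler_wpM2l (ltW pp) H.
  have -> : p phi * (1 - (q * p phi)^-1) = p phi - q^-1.
    by field; apply/andP; split; [rewrite gt_eqF|rewrite lt0r_neq0].
  rewrite /= mulrDr; lra.
rewrite /h -sumrN; apply: le_trans (ler_sum _ (fun phi _ => key phi)) _.
rewrite big_split /= -mulr_suml (X_sum1 HX hr) mul1r sumrB (X_sum1 HX hr).
suff : \sum_i (p i != 0)%:R / q <= 1 by lra.
rewrite (eq_bigr (fun phi => if p phi != 0 then q^-1 else 0)); last first.
  by move=> phi _; case: (p phi != 0); rewrite ?mul1r ?mul0r.
rewrite -big_mkcond /=.
apply: le_trans (inj_sum (Q := fun o : option Sig => o != None)
   (g := fun phi : assign => phi a) (F := fun _ => q^-1) _ _ _) _.
- move=> phi phi' /= nz nz' e; apply: (@assign_ext [set a]).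
  + exact: (X_dom HX hr nz).
  + exact: (X_dom HX hr nz').
  by move=> x; rewrite inE => /eqP ->.
- by move=> phi /supp.
- by move=> _ _; rewrite invr_ge0 ltW.
rewrite (eq_bigl (fun o => o \in predC1 None)) // sumr_const cardC1 card_option /=.
by rewrite -/q -mulr_natr mulVf // gt_eqF.
Qed.


Lemma submod (C A1 A2 : {set V}) : C \subset A1 -> C \subset A2 ->
  (#|A1 :|: A2| <= r)%N -> h (A1 :|: A2) + h C <= h A1 + h A2.
Proof.
move=> s1 s2 hA; set A := A1 :|: A2.
have sA1 : A1 \subset A := subsetUl _ _.
have sA2 : A2 \subset A := subsetUr _ _.
have sC : C \subset A := subset_trans s1 sA1.
have hA1 : (#|A1| <= r)%N := leq_trans (subset_leq_card sA1) hA.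
have hA2 : (#|A2| <= r)%N := leq_trans (subset_leq_card sA2) hA.
have hC : (#|C| <= r)%N := leq_trans (subset_leq_card sC) hA.
rewrite (h_push sA1 hA) (h_push sA2 hA) (h_push sC hA) /h.
set p := X A.
set m1 := fun phi => X A1 (restr A1 phi).
set m2 := fun phi => X A2 (restr A2 phi).
set mC := fun phi => X C (restr C phi).
set t := fun phi => p phi * ln (p phi) + p phi * ln (mC phi)
    - p phi * ln (m1 phi) - p phi * ln (m2 phi).
have et : \sum_phi t phi = \sum_phi p phi * ln (p phi) + \sum_phi p phi * ln (mC phi)
    - \sum_phi p phi * ln (m1 phi) - \sum_phi p phi * ln (m2 phi).
  by rewrite /t !big_split /= !sumrN.
suff : 0 <= \sum_phi t phi by rewrite et; lra.
have key : forall phi, (p phi != 0)%:R * p phi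
    - (p phi != 0)%:R * (m1 phi * m2 phi / mC phi) <= t phi.
  move=> phi; have [e|nz] := eqVneq (p phi) 0.
    by rewrite /t /= e !mul0r; lra.
  have pp : 0 < p phi by rewrite lt0r nz (X_ge0 HX _ hA).
  have p1 : p phi <= m1 phi := X_le_marg phi sA1 hA.
  have p2 : p phi <= m2 phi := X_le_marg phi sA2 hA.
  have pC : p phi <= mC phi := X_le_marg phi sC hA.
  have m1p : 0 < m1 phi by apply: lt_le_trans p1.
  have m2p : 0 < m2 phi by apply: lt_le_trans p2.
  have mCp : 0 < mC phi by apply: lt_le_trans pC.
  have yp : 0 < p phi * mC phi / (m1 phi * m2 phi).
    by rewrite divr_gt0 // mulr_gt0.
  have := ln_ge_1subV yp.
  rewrite ln_div ?posrE ?mulr_gt0 // !lnM ?posrE // => H.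
  have := ler_wpM2l (ltW pp) H.
  have -> : p phi * (1 - (p phi * mC phi / (m1 phi * m2 phi))^-1)
      = p phi - m1 phi * m2 phi / mC phi.
    field; rewrite !gt_eqF //.
  rewrite /t /= !mul1r => H2; apply: (le_trans H2); rewrite le_eqVlt; apply/orP; left; apply/eqP; ring.
apply: le_trans (ler_sum _ (fun phi _ => key phi)).
rewrite sumrB subr_ge0.
have -> : \sum_phi (p phi != 0)%:R * p phi = 1.
  transitivity (\sum_phi p phi); last by have := X_sum1 HX hA; apply.
  apply: eq_bigr => phi _.
  by have [->|nz] := eqVneq (p phi) 0; rewrite ?mulr0 ?nz ?mul1r.
rewrite (eq_bigr (fun phi => if p phi != 0 then m1 phi * m2 phi / mC phi else 0));
  last by move=> phi _; case: (p phi != 0); rewrite ?mul1r ?mul0r.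
rewrite -big_mkcond /=.
set F := fun pr : assign * assign => X A1 pr.1 * X A2 pr.2 / X C (restr C pr.1).
rewrite (eq_bigr (fun phi => F (restr A1 phi, restr A2 phi))); last first.
  by move=> phi _; rewrite /F /= restr_restr.
apply: le_trans (inj_sum (Q := fun pr : assign * assign => restr C pr.2 == restr C pr.1)
   (g := fun phi : assign => (restr A1 phi, restr A2 phi)) (F := F) _ _ _) _.
- move=> phi phi' /= nz nz' [e1 e2]; apply: (@assign_ext A).
  + exact: (X_dom HX hA nz).
  + exact: (X_dom HX hA nz').
  move=> x; rewrite inE => /orP[xA|xA].
    by have := congr1 (fun f : assign => f x) e1; rewrite !restrE xA.
  by have := congr1 (fun f : assign => f x) e2; rewrite !restrE xA.
- by move=> phi _ /=; rewrite !restr_restr.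
- move=> pr _; rewrite /F divr_ge0 ?mulr_ge0 //;
  [have := X_ge0 HX pr.1 hA1 | have := X_ge0 HX pr.2 hA2
  | have := X_ge0 HX (restr C pr.1) hC]; apply.
rewrite -(pair_big_dep xpredT (fun i j => restr C j == restr C i) (fun i j => F (i, j))) /=.
apply: (@le_trans _ _ (\sum_psi X A1 psi)); last by rewrite (X_sum1 HX hA1).
apply: ler_sum => psi _.
rewrite /F /= (eq_bigr (fun j => X A1 psi / X C (restr C psi) * X A2 j)); last first.
  by move=> j _; rewrite mulrAC.
rewrite -mulr_sumr (marg HX _ s2 hA2).
have [->|nz] := eqVneq (X C (restr C psi)) 0; first by rewrite mulr0; have := X_ge0 HX psi hA1; apply.
by rewrite divfK.
Qed.

End Ent.


Section Assign.
Variables (V Sig : finType).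
Local Notation assign := (assign V Sig).

Lemma dom_restr (A : {set V}) (chi : assign) : dom (restr A chi) = A :&: dom chi.
Proof. by apply/setP=> x; rewrite !inE ffunE; case: (x \in A). Qed.

Lemma mergeE (psi phi : assign) x : merge psi phi x = if psi x is Some a then Some a else phi x.
Proof. by rewrite ffunE. Qed.

Lemma restr_merge_l (A : {set V}) (psi phi : assign) : dom psi = A ->
  restr A (merge psi phi) = psi.
Proof.
move=> dA; apply/ffunP=> x; rewrite restrE mergeE.
case: ifP => xA.
  have : x \in dom psi by rewrite dA.
  by rewrite in_dom; case: (psi x).
have : x \notin dom psi by rewrite dA xA.
by rewrite in_dom negbK => /eqP ->.
Qed.

Lemma restr_merge_r (A U : {set V}) (psi phi : assign) : dom psi = A -> dom phi = U ->
  [forall x in A :&: U, psi x == phi x] ->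
  restr U (merge psi phi) = phi.
Proof.
move=> dA dU /forallP ag; apply/ffunP=> x; rewrite restrE mergeE.
case: ifP => xU.
  case e: (psi x) => [a|] //.
  have xA : x \in A by rewrite -dA in_dom e.
  by have := ag x; rewrite inE xA xU /= e => /eqP.
have : x \notin dom phi by rewrite dU xU.
by rewrite in_dom negbK => /eqP ->; case: (psi x).
Qed.

Lemma dom_merge (psi phi : assign) : dom (merge psi phi) = dom psi :|: dom phi.
Proof.
by apply/setP=> x; rewrite !inE mergeE; case: (psi x).
Qed.

Lemma merge_restr (A U : {set V}) (chi phi : assign) : dom chi = A :|: U ->
  restr U chi = phi -> merge (restr A chi) phi = chi.
Proof.
move=> dc <-; apply/ffunP=> x; rewrite mergeE !restrE.
case: ifP => xA.
  by case e: (chi x) => //; rewrite if_same.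
case: ifP => xU //.
have : x \notin dom chi by rewrite dc inE xA xU.
by rewrite in_dom negbK => /eqP ->.
Qed.

End Assign.

Section Cond.
Variables (R : realType) (V Sig : finType).
Local Notation assign := (assign V Sig).
Variable X : {set V} -> assign -> R.
Variable r : nat.
Hypothesis HX : SA_solution r X.

Lemma h_mono (B A : {set V}) : B \subset A -> (#|A| <= r)%N -> h X B <= h X A.
Proof.
move=> sBA hA; have := submod HX sBA sBA; rewrite setUid => /(_ hA).
by rewrite lerD2l.
Qed.

Lemma h_cond_le (C : {set V}) (a : V) : (#|C :|: [set a]| <= r)%N ->
  h X (C :|: [set a]) - h X C <= ln (#|Sig|%:R).
Proof.
move=> hr; have := submod HX (sub0set C) (sub0set [set a]) hr.
rewrite (h0 HX) addr0.
have r1 : (1 <= r)%N by apply: leq_trans hr; rewrite card_gt0; apply/set0Pn; exists a; rewrite !inE eqxx orbT.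
have := h_single HX a r1; lra.
Qed.

Variables (U A : {set V}).
Hypothesis hAU : (#|A :|: U| <= r)%N.

Lemma cond_sum (phi : assign) (G : assign -> R) : dom phi = U -> X U phi != 0 ->
  X U phi * \sum_psi condition X U phi A psi * G psi
  = \sum_chi X (A :|: U) chi * ((restr U chi == phi)%:R * G (restr A chi)).
Proof.
move=> dU nz.
rewrite mulr_sumr.
rewrite (eq_bigr (fun psi => if (dom psi == A) && [forall x in A :&: U, psi x == phi x]
   then X (A :|: U) (merge psi phi) * G psi else 0)); last first.
  move=> psi _; rewrite /condition; case: ifP => _; last by rewrite mul0r mulr0.
  by rewrite mulrA mulrCA divff // mulr1.
rewrite -big_mkcond /=.
rewrite [RHS](eq_bigr (fun chi => if (dom chi == A :|: U) && (restr U chi == phi)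
   then X (A :|: U) chi * G (restr A chi) else 0)); last first.
  move=> chi _; have [dc|ndc] := eqVneq (dom chi) (A :|: U).
    by rewrite /=; case: (restr U chi == phi); rewrite ?mul1r ?mul0r ?mulr0.
  have -> : X (A :|: U) chi = 0.
    by apply/eqP; apply: contraR ndc => nz'; apply/eqP; exact: (X_dom HX hAU nz').
  by rewrite mul0r.
rewrite -[RHS]big_mkcond /=.
rewrite [RHS](reindex_onto (fun psi => merge psi phi) (restr A)) /=; last first.
  by move=> chi /andP[/eqP dc /eqP rc]; exact: (merge_restr dc rc).
apply: eq_big => psi.
  apply/idP/idP.
    move=> /andP[/eqP dA ag].
    rewrite (@restr_merge_l _ _ A psi phi dA) (restr_merge_r dA dU ag) !eqxx !andbT.
    by rewrite dom_merge dA dU.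
  move=> /andP[/andP[/eqP dm /eqP rU] /eqP rA].
  have dA : dom psi = A by rewrite -rA dom_restr dm setIUr setIid; apply/setUidPl; apply: subsetIl.
  rewrite dA eqxx /=; apply/forallP=> x; apply/implyP=> /setIP[xA xU].
  have e1 := congr1 (fun f : assign => f x) rA.
  have e2 := congr1 (fun f : assign => f x) rU.
  by move: e1 e2; rewrite /= !restrE xA xU => -> ->.
by move=> /andP[/eqP dA _]; rewrite (@restr_merge_l _ _ A psi phi dA).
Qed.

End Cond.


Section TC.
Variables (R : realType) (V Sig : finType).
Local Notation assign := (assign V Sig).
Variable X : {set V} -> assign -> R.
Variable r : nat.
Hypothesis HX : SA_solution r X.
Variables (k : nat) (xs : k.-tuple V) (U : {set V}).
Let A := [set x in xs].
Hypothesis hAU : (#|A :|: U| <= r)%N.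

Let hU : (#|U| <= r)%N.
Proof. by apply: leq_trans hAU; apply: subset_leq_card; apply: subsetUr. Qed.

Lemma xsA j : tnth xs j \in A.
Proof. by rewrite inE mem_tnth. Qed.

Lemma Kuniq (chi : assign) : (forall j, chi (tnth xs j) != None) ->
  exists s0 : k.-tuple Sig, (forall j, chi (tnth xs j) = Some (tnth s0 j)) /\
    forall s, [forall j, chi (tnth xs j) == Some (tnth s j)] = (s == s0).
Proof.
move=> def.
have : forall j, exists a, chi (tnth xs j) = Some a.
  by move=> j; move: (def j); case: (chi (tnth xs j)) => [a|] // _; exists a.
case/fin_all_exists => f Hf.
exists [tuple f j | j < k]; split; first by move=> j; rewrite tnth_mktuple.
move=> s; apply/forallP/eqP => [H|->].
  apply: eq_from_tnth => j; rewrite tnth_mktuple.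
  by have := H j; rewrite Hf => /eqP [].
by move=> j; rewrite tnth_mktuple Hf.
Qed.

Lemma supp_def (chi : assign) : X (A :|: U) chi != 0 -> forall j, chi (tnth xs j) != None.
Proof.
move=> nz j; rewrite -in_dom (X_dom HX hAU nz) inE; by rewrite xsA.
Qed.

Definition Pj (phi : assign) (s : k.-tuple Sig) : R :=
  \sum_chi X (A :|: U) chi * ((restr U chi == phi)%:R *
    [forall j, chi (tnth xs j) == Some (tnth s j)]%:R).

Definition Pm (phi : assign) (i : 'I_k) (a : Sig) : R :=
  \sum_chi X (A :|: U) chi * ((restr U chi == phi)%:R * (chi (tnth xs i) == Some a)%:R).

Lemma XU_marg (phi : assign) :
  \sum_chi X (A :|: U) chi * (restr U chi == phi)%:R = X U phi.
Proof.
rewrite -(marg HX phi (subsetUr A U) hAU) [RHS]big_mkcond; apply: eq_bigr => chi _.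
by case: (_ == _); rewrite ?mulr1 ?mulr0.
Qed.

Lemma bound_gen (phi : assign) (b : assign -> bool) :
  0 <= \sum_chi X (A :|: U) chi * ((restr U chi == phi)%:R * (b chi)%:R) <= X U phi.
Proof.
apply/andP; split.
  apply: sumr_ge0 => chi _; apply: mulr_ge0; last by rewrite mulr_ge0.
  by have := X_ge0 HX chi hAU; apply.
rewrite -XU_marg; apply: ler_sum => chi _.
have x0 : 0 <= X (A :|: U) chi by have := X_ge0 HX chi hAU; apply.
by apply: ler_wpM2l => //; case: (_ == _); case: (b chi); rewrite ?mulr1 ?mulr0 ?mul0r.
Qed.

Lemma Pj_sum (phi : assign) : \sum_s Pj phi s = X U phi.
Proof.
rewrite /Pj exchange_big /= -XU_marg; apply: eq_bigr => chi _.
rewrite -mulr_sumr -mulr_sumr.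
have [->|nz] := eqVneq (X (A :|: U) chi) 0; first by rewrite !mul0r.
have [s0 [_ Hs0]] := Kuniq (supp_def nz).
rewrite (eq_bigr (fun s => if s == s0 then 1 else 0)); last first.
  by move=> s _; rewrite Hs0; case: (_ == _).
by rewrite -big_mkcond big_pred1_eq mulr1.
Qed.

Lemma jointE (phi : assign) s : dom phi = U -> X U phi != 0 ->
  X U phi * jointp (condition X U phi) xs s = Pj phi s.
Proof.
move=> dU nz; rewrite /jointp big_mkcond /=.
rewrite (eq_bigr (fun psi => condition X U phi A psi *
   [forall j, psi (tnth xs j) == Some (tnth s j)]%:R)); last first.
  by move=> psi _; case: ifP; rewrite ?mulr1 ?mulr0.
rewrite (cond_sum HX hAU) //; apply: eq_bigr => chi _.
have -> : [forall j, restr A chi (tnth xs j) == Some (tnth s j)] = [forall j, chi (tnth xs j) == Some (tnth s j)].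
  by apply: eq_forallb => j; rewrite restrE xsA.
by [].
Qed.

Lemma Some_eq (a b : Sig) : (Some a == Some b) = (a == b).
Proof. by apply/eqP/eqP => [[]|->]. Qed.

Lemma margE (phi : assign) i a : dom phi = U -> X U phi != 0 ->
  X U phi * margp (condition X U phi) xs i a = Pm phi i a.
Proof.
move=> dU nz; rewrite /margp mulr_sumr.
rewrite (eq_bigr (fun s => Pj phi s)); last by move=> s _; apply: jointE.
rewrite /Pj (exchange_big_dep xpredT) //=; rewrite /Pm; apply: eq_bigr => chi _.
have [->|nzc] := eqVneq (X (A :|: U) chi) 0; first by rewrite mul0r big1 // => s _; rewrite mul0r.
have [s0 [Hv Hs0]] := Kuniq (supp_def nzc).
rewrite big_mkcond /=.
rewrite (eq_bigr (fun s => if s == s0 then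
   X (A :|: U) chi * ((restr U chi == phi)%:R * (tnth s0 i == a)%:R) else 0)); last first.
  move=> s _; rewrite Hs0 andbT; have [->|ns] := eqVneq s s0.
    by case: (_ == a); rewrite ?mulr1 ?mulr0.
  by rewrite !mulr0 if_same.
by rewrite -big_mkcond big_pred1_eq Hv Some_eq.
Qed.

Lemma Pj_Gsum (phi : assign) (i : 'I_k) (G : Sig -> R) :
  \sum_s Pj phi s * G (tnth s i) = \sum_a Pm phi i a * G a.
Proof.
rewrite /Pj /Pm.
under eq_bigr do rewrite mulr_suml.
under [RHS]eq_bigr do rewrite mulr_suml.
rewrite exchange_big [RHS]exchange_big /=.
apply: eq_bigr => chi _.
have [->|nz] := eqVneq (X (A :|: U) chi) 0.
  by rewrite !big1 // => ? _; rewrite !mul0r.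
have [s0 [Hv Hs0]] := Kuniq (supp_def nz).
set c := (restr U chi == phi)%:R.
rewrite (eq_bigr (fun s => if s == s0 then X (A :|: U) chi * c * G (tnth s0 i) else 0)); last first.
  by move=> s _; rewrite Hs0; case: eqP => [->|_]; rewrite ?mulr1 ?mulr0 ?mul0r // mulrA.
rewrite [RHS](eq_bigr (fun a => if a == tnth s0 i then X (A :|: U) chi * c * G (tnth s0 i) else 0)); last first.
  by move=> a _; rewrite Hv Some_eq eq_sym; case: eqP => [->|_]; rewrite ?mulr1 ?mulr0 ?mul0r // mulrA.
by rewrite -!big_mkcond !big_pred1_eq.
Qed.

Lemma Pj_le_Pm (phi : assign) s i : Pj phi s <= Pm phi i (tnth s i).
Proof.
apply: ler_sum => chi _.
have x0 : 0 <= X (A :|: U) chi by have := X_ge0 HX chi hAU; apply.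
apply: ler_wpM2l => //; apply: ler_wpM2l; first by case: (_ == _).
case: forallP => [H|_]; last by case: (_ == _).
by rewrite (H i) lexx.
Qed.

Definition Fl (y : R) := y * ln y.

Lemma ln_prod (I : finType) (P : pred I) (f : I -> R) : (forall i, P i -> 0 < f i) ->
  ln (\prod_(i | P i) f i) = \sum_(i | P i) ln (f i).
Proof.
move=> fp; rewrite unlock /=; elim: (index_enum I) => [|i l IH] /=; first by rewrite ln1.
case: ifP => Pi //; rewrite lnM ?IH // posrE ?fp //.
elim: l {IH} => [|j l IH] /=; first by rewrite ltr01.
by case: ifP => Pj //; rewrite mulr_gt0 ?fp.
Qed.

Lemma tc_phi (phi : assign) :
  X U phi * totcorr (condition X U phi) xs =
  (\sum_s Fl (Pj phi s) - Fl (X U phi))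
  - \sum_(i < k) (\sum_a Fl (Pm phi i a) - Fl (X U phi)).
Proof.
have [z|nz] := eqVneq (X U phi) 0.
  have Pj0 : forall s, Pj phi s = 0.
    move=> s; apply/eqP; rewrite eq_le.
    have := bound_gen phi (fun chi => [forall j, chi (tnth xs j) == Some (tnth s j)]).
    by rewrite z => /andP[-> ->].
  have Pm0 : forall i a, Pm phi i a = 0.
    move=> i a; apply/eqP; rewrite eq_le.
    have := bound_gen phi (fun chi => chi (tnth xs i) == Some a).
    by rewrite z => /andP[-> ->].
  rewrite z mul0r /Fl mul0r subr0 big1 => [|s _]; last by rewrite Pj0 mul0r.
  rewrite big1 ?subr0 // => i _.
  by rewrite big1 ?subr0 // => a _; rewrite Pm0 mul0r.
have dU : dom phi = U := X_dom HX hU nz.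
set x := X U phi.
have xp : 0 < x by rewrite lt0r nz; have := X_ge0 HX phi hU; apply.
set Y := condition X U phi.
have Je : forall s, Pj phi s = x * jointp Y xs s by move=> s; rewrite jointE.
have Me : forall i a, Pm phi i a = x * margp Y xs i a by move=> i a; rewrite margE.
have J0 : forall s, 0 <= jointp Y xs s.
  move=> s; rewrite -(pmulr_rge0 _ xp) -Je.
  have := bound_gen phi (fun chi => [forall j, chi (tnth xs j) == Some (tnth s j)]).
  by case/andP.
rewrite /totcorr mulr_sumr big_mkcond /=.
rewrite (eq_bigr (fun s => Pj phi s * (ln (Pj phi s) - ln x
   - \sum_(i < k) (ln (Pm phi i (tnth s i)) - ln x)))); last first.
  move=> s _; case: ifP => Jp; last first.
    have -> : Pj phi s = 0.
      by rewrite Je (_ : jointp Y xs s = 0) ?mulr0 //; apply/eqP; rewrite eq_le J0 andbT leNgt Jp.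
    by rewrite mul0r.
  have Mp : forall i, 0 < margp Y xs i (tnth s i).
    move=> i; rewrite -(pmulr_rgt0 _ xp) -Me.
    by apply: lt_le_trans (Pj_le_Pm phi s i); rewrite Je mulr_gt0.
  have Pp : 0 < \prod_i margp Y xs i (tnth s i) by apply: prodr_gt0 => i _; apply: Mp.
  rewrite ln_div ?posrE // (ln_prod (fun i _ => Mp i)).
  rewrite Je lnM ?posrE //.
  under [in RHS]eq_bigr do rewrite Me lnM ?posrE //.
  rewrite !mulrA; congr (_ * _).
  rewrite [in RHS](eq_bigr (fun i => ln (margp Y xs i (tnth s i)))); last by move=> i _; ring.
  ring.
under eq_bigr do rewrite mulrBr mulrBr mulr_sumr.
rewrite sumrB sumrB.
have E1 : \sum_s Pj phi s * ln x = Fl x by rewrite -mulr_suml Pj_sum.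
rewrite E1 exchange_big /=.
congr (_ - _ - _).
apply: eq_bigr => i _.
under eq_bigr do rewrite mulrBr.
by rewrite sumrB E1 (Pj_Gsum phi i (fun a => ln (Pm phi i a))).
Qed.

Lemma sumPj : \sum_phi \sum_s Fl (Pj phi s) = - h X (A :|: U).
Proof.
have E : forall phi s, Pj phi s = \sum_(chi | (restr U chi == (phi, s).1) &&
    [forall j, chi (tnth xs j) == Some (tnth (phi, s).2 j)]) X (A :|: U) chi.
  move=> phi s; rewrite /Pj [RHS]big_mkcond /=; apply: eq_bigr => chi _.
  by case: (_ == _); case: [forall j, _]; rewrite /= ?mulr1 ?mulr0.
rewrite (eq_bigr (fun phi => \sum_s Fl (\sum_(chi | (restr U chi == (phi, s).1) &&
    [forall j, chi (tnth xs j) == Some (tnth (phi, s).2 j)]) X (A :|: U) chi))); last first.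
  by move=> phi _; apply: eq_bigr => s _; rewrite E.
rewrite pair_big /= /h opprK.
apply: (key_sum (D := fun chi => X (A :|: U) chi != 0)).
- by rewrite /Fl mul0r.
- by move=> chi; rewrite negbK => /eqP.
- move=> [phi s] chi chi' nz nz' /andP[/eqP r1 /forallP f1] /andP[/eqP r2 /forallP f2].
  apply: (@assign_ext _ _ (A :|: U)).
  + exact: (X_dom HX hAU nz).
  + exact: (X_dom HX hAU nz').
  move=> y; rewrite inE => /orP[yA|yU].
    move: yA; rewrite inE => /tnthP[j ->].
    by have := f1 j; have := f2 j; rewrite /= => /eqP -> /eqP ->.
  have := congr1 (fun f : assign => f y) r1; have := congr1 (fun f : assign => f y) r2.
  by rewrite /= !restrE yU => -> ->.
- move=> chi nz; have [s0 [_ Hs0]] := Kuniq (supp_def nz).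
  exists (restr U chi, s0) => -[phi s] /=.
  by rewrite Hs0 xpair_eqE eq_sym.
Qed.

Lemma sumPm (i : 'I_k) :
  \sum_phi \sum_a Fl (Pm phi i a) = - h X (U :|: [set tnth xs i]).
Proof.
set B := U :|: [set tnth xs i].
have sUB : U \subset B := subsetUl _ _.
have xB : tnth xs i \in B by rewrite !inE eqxx orbT.
have sBA : B \subset A :|: U.
  by rewrite subUset subsetUr /= sub1set; apply/setUP; left; exact: xsA.
have hB : (#|B| <= r)%N := leq_trans (subset_leq_card sBA) hAU.
have E : forall phi a, Pm phi i a = \sum_(psi | (restr U psi == (phi, a).1) &&
    (psi (tnth xs i) == Some (phi, a).2)) X B psi.
  move=> phi a.
  have P := push HX (fun psi => (restr U psi == phi)%:R * (psi (tnth xs i) == Some a)%:R) sBA hAU.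
  rewrite /= in P.
  rewrite [RHS]big_mkcond /=.
  transitivity (\sum_psi X B psi * ((restr U psi == phi)%:R * (psi (tnth xs i) == Some a)%:R)).
    by rewrite -P /Pm; apply: eq_bigr => chi _; rewrite restr_restr // restrE xB.
  apply: eq_bigr => psi _.
  by case: (_ == _); case: (_ == _); rewrite /= ?mulr1 ?mulr0.
rewrite (eq_bigr (fun phi => \sum_a Fl (\sum_(psi | (restr U psi == (phi, a).1) &&
    (psi (tnth xs i) == Some (phi, a).2)) X B psi))); last first.
  by move=> phi _; apply: eq_bigr => a _; rewrite E.
rewrite pair_big /= /h opprK.
apply: (key_sum (D := fun psi => X B psi != 0)).
- by rewrite /Fl mul0r.
- by move=> psi; rewrite negbK => /eqP.
- move=> [phi a] psi psi' nz nz' /andP[/eqP r1 /eqP f1] /andP[/eqP r2 /eqP f2].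
  apply: (@assign_ext _ _ B).
  + exact: (X_dom HX hB nz).
  + exact: (X_dom HX hB nz').
  move=> y; rewrite inE => /orP[yU|yi].
    have := congr1 (fun f : assign => f y) r1; have := congr1 (fun f : assign => f y) r2.
    by rewrite /= !restrE yU => -> ->.
  by move: yi; rewrite inE => /eqP ->; rewrite f1 f2.
- move=> psi nz.
  have : tnth xs i \in dom psi by rewrite (X_dom HX hB nz).
  rewrite in_dom; case e: (psi (tnth xs i)) => [v|] // _.
  exists (restr U psi, v) => -[phi a] /=.
  by rewrite xpair_eqE Some_eq [phi == _]eq_sym [a == _]eq_sym.
Qed.

Lemma totcorr_avg :
  \sum_phi X U phi * totcorr (condition X U phi) xs =
  \sum_(i < k) (h X (U :|: [set tnth xs i]) - h X U) - (h X (A :|: U) - h X U).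
Proof.
under eq_bigr do rewrite tc_phi.
rewrite sumrB sumrB sumPj.
have EU : \sum_phi Fl (X U phi) = - h X U by rewrite /h opprK.
rewrite EU exchange_big /=.
rewrite (eq_bigr (fun i => - h X (U :|: [set tnth xs i]) + h X U)); last first.
  by move=> i _; rewrite sumrB sumPm EU; lra.
have S : \sum_(i < k) (h X (U :|: [set tnth xs i]) - h X U) =
  - \sum_(i < k) (- h X (U :|: [set tnth xs i]) + h X U).
  by rewrite -sumrN; apply: eq_bigr => i _; lra.
rewrite S; lra.
Qed.

End TC.


Section Comb.
Variables (R : realType) (V : finType) (H : {set V} -> R).
Local Notation n := (#|V|%:R : R).

Definition Gf (C : {set V}) (s : seq V) : R :=
  \sum_(y <- s) (H (C :|: [set y]) - H C) - (H ([set x in s] :|: C) - H C).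

Definition I3 (a b : V) (C : {set V}) : R :=
  H (C :|: [set a]) + H (C :|: [set b]) - H (C :|: [set a] :|: [set b]) - H C.

Lemma Gf_nil C : Gf C [::] = 0.
Proof.
rewrite /Gf big_nil (_ : [set x in [::]] = set0); last by apply/setP => x; rewrite !inE.
by rewrite set0U subrr subrr.
Qed.

Lemma Gf_cons C x s : Gf C (x :: s) = Gf (C :|: [set x]) s + \sum_(y <- s) I3 x y C.
Proof.
rewrite /Gf big_cons.
have -> : [set z in x :: s] :|: C = [set z in s] :|: (C :|: [set x]).
  by apply/setP => z; rewrite !inE; case: (z == x); case: (z \in s); case: (z \in C).
have E : \sum_(y <- s) (H (C :|: [set x] :|: [set y]) - H (C :|: [set x]))
    + \sum_(y <- s) I3 x y C = \sum_(y <- s) (H (C :|: [set y]) - H C).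
  by rewrite -big_split; apply: eq_bigr => y _; rewrite /I3 /=; ring.
lra.
Qed.

Lemma sum_tuple_cons m (F : seq V -> R) :
  \sum_(t : m.+1.-tuple V) F t = \sum_x \sum_(t : m.-tuple V) F (x :: t).
Proof.
rewrite pair_big /=.
rewrite (reindex (fun p : V * m.-tuple V => [tuple of p.1 :: p.2])) /=; last first.
  exists (fun t : m.+1.-tuple V => (thead t, [tuple of behead t])).
    by move=> [x t] _ /=; rewrite theadE; congr pair; apply: val_inj.
  by move=> t _; rewrite [RHS]tuple_eta.
by apply: eq_bigr => -[x t].
Qed.

Lemma sum_tuple_const m (c : R) : \sum_(t : m.-tuple V) c = n ^+ m * c.
Proof. by rewrite sumr_const card_tuple -[c *+ _]mulr_natr natrX mulrC. Qed.

Lemma sum_tuple_count m (f : V -> R) :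
  \sum_(t : m.-tuple V) \sum_(y <- t) f y = m%:R * n ^+ m.-1 * \sum_b f b.
Proof.
elim: m => [|m IH].
  by rewrite big1 ?mul0r // => t _; rewrite tuple0 big_nil.
rewrite (sum_tuple_cons m (fun s => \sum_(y <- s) f y)) /=.
rewrite (eq_bigr (fun x => n ^+ m * f x + m%:R * n ^+ m.-1 * \sum_b f b)); last first.
  by move=> x _; under eq_bigr do rewrite big_cons; rewrite big_split /= sum_tuple_const IH.
rewrite big_split /= -mulr_sumr [X in _ + X = _]sumr_const -[X in _ + X = _]mulr_natr.
case: m {IH} => [|m] /=; first by ring.
rewrite exprS; ring.
Qed.

Definition Em m (f : {set V} -> R) : R := \sum_(T : m.-tuple V) f [set x in T].

Lemma Em_S m f : Em m.+1 f = Em m (fun C => \sum_x f (C :|: [set x])).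
Proof.
rewrite /Em (sum_tuple_cons m (fun s => f [set x in s])) exchange_big /=; apply: eq_bigr => t _; apply: eq_bigr => x _.
congr f; apply/setP => z; rewrite !inE; by case: (z == x); case: (z \in t).
Qed.

Definition Phi (C : {set V}) : R := \sum_a (H (C :|: [set a]) - H C).
Definition Dd (C : {set V}) : R := \sum_a \sum_b I3 a b C.

Lemma Dd_E C : Dd C = n * Phi C - \sum_b Phi (C :|: [set b]).
Proof.
rewrite /Dd /Phi exchange_big /=.
have -> : n * \sum_a (H (C :|: [set a]) - H C) = \sum_(b : V) \sum_a (H (C :|: [set a]) - H C).
  by rewrite sumr_const -[X in _ = X]mulr_natr mulrC.
rewrite -sumrB; apply: eq_bigr => b _; rewrite -sumrB; apply: eq_bigr => a _.
by rewrite /I3 setUAC; ring.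
Qed.

Definition Gam m (C : {set V}) : R := \sum_(S : m.-tuple V) Gf C S.

Lemma Gam0 C : Gam 0 C = 0.
Proof. by rewrite /Gam big1 // => t _; rewrite tuple0 Gf_nil. Qed.

Lemma GamS m C : Gam m.+1 C = \sum_x Gam m (C :|: [set x]) + m%:R * n ^+ m.-1 * Dd C.
Proof.
rewrite /Gam (sum_tuple_cons m (Gf C)).
under eq_bigr do under eq_bigr do rewrite Gf_cons.
under eq_bigr do rewrite big_split /=.
rewrite big_split /=; congr (_ + _).
under eq_bigr do rewrite (sum_tuple_count m (fun y => I3 _ y C)).
by rewrite -mulr_sumr.
Qed.

Lemma Em_Gam m s : Em s (Gam m.+1) =
  Em s.+1 (Gam m) + m%:R * n ^+ m.-1 * (n * Em s Phi - Em s.+1 Phi).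
Proof.
rewrite Em_S Em_S /Em.
under eq_bigr do rewrite GamS Dd_E.
rewrite big_split /=; congr (_ + _).
by rewrite -mulr_sumr sumrB mulr_sumr.
Qed.

End Comb.


Lemma card_U1 (V : finType) (C : {set V}) a : (#|C :|: [set a]| <= #|C|.+1)%N.
Proof. by rewrite cardsU cards1 addn1 leq_subr. Qed.

Section Bounds.
Variables (R : realType) (V Sig : finType).
Local Notation assign := (assign V Sig).
Variable X : {set V} -> assign -> R.
Variable r : nat.
Hypothesis HX : SA_solution r X.
Local Notation n := (#|V|%:R : R).
Local Notation L := (ln (#|Sig|%:R) : R).

Lemma I3_ge0 (a b : V) (C : {set V}) : (#|C :|: [set a] :|: [set b]| <= r)%N -> 0 <= I3 (h X) a b C.
Proof.
move=> hr.
have := submod HX (subsetUl C [set a]) (subsetUl C [set b]).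
have -> : C :|: [set a] :|: (C :|: [set b]) = C :|: [set a] :|: [set b].
  by apply/setP => z; rewrite !inE; case: (z \in C); case: (z == a); case: (z == b).
move=> /(_ hr) H; rewrite /I3; lra.
Qed.

Lemma Gf_ge0 (s : seq V) (C : {set V}) : (#|[set x in s] :|: C| <= r)%N -> 0 <= Gf (h X) C s.
Proof.
elim: s C => [|x s IH] C hr; first by rewrite Gf_nil.
rewrite Gf_cons; apply: addr_ge0.
  apply: IH; apply: leq_trans hr; apply: subset_leq_card.
  by apply/subsetP => z; rewrite !inE; case: (z == x); case: (z \in s); case: (z \in C).
rewrite big_seq; apply: sumr_ge0 => y ys; apply: I3_ge0.
apply: leq_trans hr; apply: subset_leq_card.
apply/subsetP => z; rewrite !inE.
case/orP => [/orP[zC|/eqP->]|/eqP->]; rewrite ?zC ?eqxx ?ys ?orbT //.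
Qed.

Lemma L_ge0 : 0 <= L.
Proof.
case: (posnP #|Sig|) => [->|q0]; first by rewrite ln0.
by apply: ln_ge0; rewrite ler1n.
Qed.

Lemma Phi_bounds (C : {set V}) : (#|C| < r)%N -> 0 <= Phi (h X) C <= n * L.
Proof.
move=> hC.
have hCa : forall a, (#|C :|: [set a]| <= r)%N := fun a => leq_trans (card_U1 C a) hC.
apply/andP; split.
  apply: sumr_ge0 => a _; rewrite subr_ge0; apply: (h_mono HX) => //.
  exact: subsetUl.
rewrite /Phi (@le_trans _ _ (\sum_(a : V) L)) //.
  by apply: ler_sum => a _; apply: (h_cond_le HX).
by rewrite sumr_const -[X in X <= _]mulr_natr mulrC.
Qed.

Lemma Em_Phi_bounds s : (s < r)%N -> 0 <= Em s (Phi (h X)) <= n ^+ s * (n * L).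
Proof.
move=> hs.
have hT : forall T : s.-tuple V, (#|[set x in T]| < r)%N.
  by move=> T; apply: leq_ltn_trans hs; rewrite cardsE (leq_trans (card_size _)) // size_tuple.
rewrite /Em; apply/andP; split.
  by apply: sumr_ge0 => T _; have /andP[p1 p2] := Phi_bounds (hT T).
rewrite -sum_tuple_const; apply: ler_sum => T _.
by have /andP[p1 p2] := Phi_bounds (hT T).
Qed.

End Bounds.

Section Norm.
Variables (R : realType) (V Sig : finType).
Local Notation assign := (assign V Sig).
Variable X : {set V} -> assign -> R.
Variable r : nat.
Hypothesis HX : SA_solution r X.
Local Notation n := (#|V|%:R : R).
Local Notation L := (ln (#|Sig|%:R) : R).
Hypothesis n0 : (0 < #|V|)%N.

Let np : 0 < n. Proof. by rewrite ltr0n. Qed.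
Let nz : n != 0. Proof. by rewrite gt_eqF. Qed.

Definition phiN s := Em s (Phi (h X)) / n ^+ s.+1.
Definition gamN s m := Em s (Gam (h X) m) / n ^+ (s + m).

Lemma gamN0 s : gamN s 0 = 0.
Proof. by rewrite /gamN /Em big1 ?mul0r // => T _; rewrite Gam0. Qed.

Lemma gamNS s m : gamN s m.+1 = gamN s.+1 m + m%:R * (phiN s - phiN s.+1).
Proof.
rewrite /gamN /phiN Em_Gam.
case: m => [|m].
  by rewrite !mul0r addr0 addn0 addn1 addr0.
set E1 := Em s.+1 _; set E2 := Em s _; set E3 := Em s.+1 _.
have e1 : n ^+ (s + m.+2) = n ^+ s * n ^+ m * (n * n).
  by rewrite addnS addnS !exprS exprD; ring.
have e2 : n ^+ (s.+1 + m.+1) = n ^+ s * n ^+ m * (n * n).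
  by rewrite addSn addnS !exprS exprD; ring.
have e3 : n ^+ s.+2 = n ^+ s * (n * n) by rewrite !exprS; ring.
have e4 : n ^+ s.+1 = n ^+ s * n by rewrite exprS; ring.
rewrite e1 e2 e3 e4 /=.
have ps : n ^+ s != 0 by rewrite expf_neq0.
have pm : n ^+ m != 0 by rewrite expf_neq0.
by field; rewrite ps pm nz.
Qed.

Lemma phiN_bounds s : (s < r)%N -> 0 <= phiN s <= L.
Proof.
move=> hs; have /andP[p1 p2] := Em_Phi_bounds HX hs.
have pp : 0 < n ^+ s.+1 by rewrite exprn_gt0.
rewrite /phiN divr_ge0 ?(ltW pp) //= ler_pdivrMr //.
by apply: (le_trans p2); rewrite exprS le_eqVlt; apply/orP; left; apply/eqP; ring.
Qed.

Lemma gam_sum (l m : nat) : forall s, (s + m + l <= r)%N ->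
  \sum_(t < l) gamN (s + t) m <= m%:R ^+ 2 * L.
Proof.
elim: m => [|m IH] s hs.
  rewrite big1 => [|t _]; last exact: gamN0.
  by rewrite mulr_ge0 ?sqr_ge0 ?L_ge0.
under eq_bigr do rewrite gamNS.
rewrite big_split /=.
have A : \sum_(t < l) gamN (s + t).+1 m <= m%:R ^+ 2 * L.
  rewrite (eq_bigr (fun t : 'I_l => gamN (s.+1 + t) m)); last by move=> t _; rewrite addSn.
  by apply: IH; rewrite addSn -addnS.
have B : \sum_(t < l) m%:R * (phiN (s + t) - phiN (s + t).+1)
    = m%:R * (phiN s - phiN (s + l)).
  rewrite -mulr_sumr; congr (_ * _).
  have T := telescope_sumr (fun i => phiN (s + i)) (leq0n l).
  rewrite big_mkord addn0 in T.
  have -> : phiN s - phiN (s + l) = - (phiN (s + l) - phiN s) by rewrite opprB.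
  rewrite -T -sumrN; apply: eq_bigr => i _; rewrite addnS; lra.
rewrite B.
have /andP[_ a1] := phiN_bounds (s := s) ltac:(lia).
have /andP[b0 _] := phiN_bounds (s := s + l) ltac:(lia).
have M0 : (0 : R) <= m%:R by rewrite ler0n.
have L0 := L_ge0 R Sig.
have C1 : m%:R * (phiN s - phiN (s + l)) <= m%:R * L.
  by apply: ler_wpM2l => //; lra.
have C2 : 0 <= m%:R * L by apply: mulr_ge0.
have E : (m.+1)%:R ^+ 2 * L = m%:R ^+ 2 * L + 2 * (m%:R * L) + L.
  by rewrite -natr1; ring.
rewrite E; lra.
Qed.

End Norm.


Section Final.
Variables (R : realType) (V Sig : finType).
Local Notation assign := (assign V Sig).
Variable X : {set V} -> assign -> R.
Variable r : nat.
Hypothesis HX : SA_solution r X.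
Local Notation n := (#|V|%:R : R).
Variables (k : nat) (W : k.-tuple V -> R).

Lemma card_tset m (T : m.-tuple V) : (#|[set x in T]| <= m)%N.
Proof. by rewrite cardsE (leq_trans (card_size _)) // size_tuple. Qed.

Lemma expCond_E (t : nat) : (t + k <= r)%N ->
  expCond W X t = (n ^+ t)^-1 *
    \sum_(T : t.-tuple V) \sum_(S : k.-tuple V) W S * Gf (h X) [set x in T] S.
Proof.
move=> htk; rewrite /expCond; congr (_ * _); apply: eq_bigr => T _.
rewrite /Ccorr.
under eq_bigr do rewrite mulr_sumr.
rewrite exchange_big /=; apply: eq_bigr => S _.
have hAU : (#|[set x in S] :|: [set x in T]| <= r)%N.
  apply: leq_trans htk; rewrite cardsU addnC.
  apply: leq_trans (leq_subr _ _) _; apply: leq_add; exact: card_tset.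
rewrite /Gf big_tuple -(totcorr_avg HX hAU) mulr_sumr; apply: eq_bigr => phi _.
by rewrite mulrCA.
Qed.

Lemma expCond_le (t : nat) (Delta : R) : (t + k <= r)%N -> 0 < Delta ->
  (forall S, 0 <= W S) -> dense Delta W -> (0 < #|V|)%N ->
  expCond W X t <= gamN X t k / Delta.
Proof.
move=> htk D0 W0 dW n0.
have np : 0 < n by rewrite ltr0n.
rewrite (expCond_E htk).
have hG : forall (T : t.-tuple V) (S : k.-tuple V), 0 <= Gf (h X) [set x in T] S.
  move=> T S; apply: (Gf_ge0 HX); apply: leq_trans htk; rewrite cardsU addnC.
  by apply: leq_trans (leq_subr _ _) _; apply: leq_add; exact: card_tset.
have WS : forall S, W S <= (n ^+ k)^-1 / Delta.
  move=> S; have := dW S; rewrite div1r => H.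
  by rewrite ler_pdivlMr // mulrC.
apply: (@le_trans _ _ ((n ^+ t)^-1 * \sum_(T : t.-tuple V) \sum_(S : k.-tuple V)
    (n ^+ k)^-1 / Delta * Gf (h X) [set x in T] S)).
  rewrite ler_pM2l ?invr_gt0 ?exprn_gt0 //.
  apply: ler_sum => T _; apply: ler_sum => S _.
  by apply: ler_wpM2r => //.
rewrite /gamN /Em /Gam.
under eq_bigr do rewrite -mulr_sumr.
rewrite -mulr_sumr exprD.
have ps : n ^+ t != 0 by rewrite expf_neq0 // gt_eqF.
have pk : n ^+ k != 0 by rewrite expf_neq0 // gt_eqF.
rewrite le_eqVlt; apply/orP; left; apply/eqP.
by field; rewrite ps pk gt_eqF.
Qed.

End Final.

Theorem lemma5p1_proof (R : realType) (V Sig : finType) (k r q : nat) (Delta : R)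
  (W : k.-tuple V -> R) (P : k.-tuple V -> k.-tuple Sig -> R)
  (X : {set V} -> assign V Sig -> R) :
  #|Sig| = q ->
  (forall S, 0 <= W S) -> \sum_S W S = 1 ->
  (forall S s, 0 <= P S s <= 1) ->
  0 < Delta -> dense Delta W ->
  SA_solution r X ->
  forall l : nat, (0 < l)%N -> (l <= r - k)%N ->
  exists t : nat, (t <= l)%N /\
    expCond W X t <= (k ^ 2)%:R * ln (q%:R) / (l%:R * Delta).
Proof.
move=> hq W0 W1 _ D0 dW HX l l0 hl.
have hkl : (k + l <= r)%N by lia.
rewrite -hq.
have [k0|kpos] := posnP k.
  subst k; exists 0%N; split => //.
  rewrite (expCond_E HX) ?add0n; last by apply: leq_trans hkl; rewrite add0n.
  rewrite big1 ?mulr0; last first.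
    by move=> T _; rewrite big1 // => S _; rewrite tuple0 Gf_nil mulr0.
  by rewrite (_ : (0 ^ 2)%:R = 0 :> R) // !mul0r.
have n0 : (0 < #|V|)%N.
  case: (pickP (fun S : k.-tuple V => W S != 0)) => [S _|H].
    by apply/card_gt0P; exists (tnth S (Ordinal kpos)).
  exfalso; move: W1; rewrite big1 => [|S _]; last by move: (H S) => /negbFE/eqP.
  by move/eqP; rewrite eq_sym oner_eq0.
set L := ln (#|Sig|%:R) : R.
set B := k%:R ^+ 2 * L / Delta.
have Hsum : \sum_(t < l) expCond W X t <= B.
  apply: (@le_trans _ _ (\sum_(t < l) gamN X (0 + t) k / Delta)).
    apply: ler_sum => t _; rewrite add0n; apply: (expCond_le HX) => //.
    by have := ltn_ord t; lia.
  rewrite -mulr_suml ler_pM2r ?invr_gt0 //.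
  by apply: (gam_sum HX) => //; rewrite add0n.
case: (pickP (fun t : 'I_l => expCond W X t <= B / l%:R)) => [t Ht|H].
  exists t; split; first exact: ltnW.
  apply: le_trans Ht _; rewrite le_eqVlt; apply/orP; left; apply/eqP.
  rewrite /B natrX; field.
  by rewrite (gt_eqF D0) pnatr_eq0 -lt0n l0.
exfalso.
have Hlt : \sum_(t < l) B / l%:R < \sum_(t < l) expCond W X t.
  apply: ltr_sum.
    by apply/hasP; exists (Ordinal l0); rewrite ?mem_index_enum.
  by move=> t _; move: (H t); rewrite ltNge => ->.
have e : B / l%:R *+ l = B.
  by rewrite -[_ *+ l]mulr_natr divfK // pnatr_eq0 -lt0n l0.
move: Hlt; rewrite sumr_const card_ord e => Hlt.
by have := lt_le_trans Hlt Hsum; rewrite ltxx.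
Qed.


Unset Implicit Arguments. Set Strict Implicit. Set Printing Implicit Defensive.

Theorem lemma5p1 (R : realType) (V Sig : finType) (k r q : nat) (Delta : R)
  (W : k.-tuple V -> R) (P : k.-tuple V -> k.-tuple Sig -> R)
  (X : {set V} -> assign V Sig -> R) :
  #|Sig| = q ->
  (forall S, 0 <= W S) -> \sum_S W S = 1 ->
  (forall S s, 0 <= P S s <= 1) ->
  0 < Delta -> dense Delta W ->
  SA_solution r X ->
  forall l : nat, (0 < l)%N -> (l <= r - k)%N ->
  exists t : nat, (t <= l)%N /\
    expCond W X t <= (k ^ 2)%:R * ln (q%:R) / (l%:R * Delta).
Proof.
exact: (@lemma5p1_proof R V Sig k r q Delta W P X).
Qed.
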